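(* Let $H$ be a connected graph containing a triangle, let $u$ be a vertex of $H$, and let $M$ be a unicyclic graph with unique cycle $C$. Let $r\ge |V(H)|+3$ and let $U$ be the set of vertices of $M$ at distance exactly $r$ from $C$. Then there is a homomorphism from $M$ to $H$ that maps every vertex of $U$ to $u$.
   Context: Graphs are simple and loopless. A homomorphism from $M$ to $H$ is a map $h:V(M)\to V(H)$ sending every edge to an edge. A graph is unicyclic if it contains exactly one cycle. The distance from a vertex to a set of vertices is the minimum length of a path from the vertex to a vertex of the set. *)

(* Defs.v *)
From mathcomp Require Import all_boot.
Set Implicit Arguments. Unset Strict Implicit. Unset Printing Implicit Defensive.

Definition simple_graph (T : finType) (e : rel T) : Prop :=
  symmetric e /\ irreflexive e.

Definition connected_graph (T : finType) (e : rel T) : Prop :=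
  forall x y : T, connect e x y.

Definition has_triangle (T : finType) (e : rel T) : Prop :=
  exists a b c : T, [&& e a b, e b c & e c a].

Definition is_hom (T1 T2 : finType) (e1 : rel T1) (e2 : rel T2) (h : T1 -> T2) : Prop :=
  forall x y, e1 x y -> e2 (h x) (h y).

Definition is_cycle (T : finType) (e : rel T) (s : seq T) : bool :=
  [&& uniq s, 2 < size s & cycle e s].

Definition cycle_edge (T : finType) (s : seq T) (x y : T) : bool :=
  [&& x \in s, y \in s & (next s x == y) || (next s y == x)].

Definition same_cycle (T : finType) (s t : seq T) : Prop :=
  forall x y, cycle_edge s x y = cycle_edge t x y.

Definition unique_cycle (T : finType) (e : rel T) (C : seq T) : Prop :=
  is_cycle e C /\ forall t, is_cycle e t -> same_cycle C t.

Definition walk_to (T : finType) (e : rel T) (k : nat) (x : T) (A : pred T) : Prop :=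
  exists p : seq T, [/\ size p = k, path e x p & A (last x p)].

Definition dist_to_eq (T : finType) (e : rel T) (x : T) (A : pred T) (r : nat) : Prop :=
  walk_to e r x A /\ forall k, k < r -> ~ walk_to e k x A.

(* Main.v *)
Require Import Defs.
From mathcomp Require Import all_boot.
Set Implicit Arguments. Unset Strict Implicit. Unset Printing Implicit Defensive.

Section MSide.
Variables (T : finType) (e : rel T) (C : seq T).
Hypotheses (esym : symmetric e) (eirr : irreflexive e) (Hcyc : unique_cycle e C).

Definition rm (x y : T) : rel T :=
  [rel z w | e z w && ~~ (((z == x) && (w == y)) || ((z == y) && (w == x)))].

Lemma rm_sym x y : symmetric (rm x y).
Proof.
move=> z w; rewrite /rm /= esym; congr (_ && ~~ _).
by rewrite orbC; congr (_ || _); rewrite andbC.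
Qed.

Lemma rm_e x y z w : rm x y z w -> e z w.
Proof. by case/andP. Qed.

Lemma upath_of_connect (f : rel T) a b : connect f a b ->
  exists p, [/\ path f a p, uniq (a :: p) & last a p = b].
Proof.
move/connectP=> [p Hp ->]; case: (shortenP Hp) => p' H1 H2 _.
by exists p'.
Qed.

Lemma next_last_uniq (x : T) p : uniq (x :: p) -> next (x :: p) (last x p) = x.
Proof.
move=> Hu; rewrite next_nth mem_last.
rewrite (index_last Hu) nth_default //.
Qed.

Lemma key x y : e x y -> connect (rm x y) x y -> cycle_edge C x y.
Proof.
move=> exy /upath_of_connect [p [Hp Hu Hl]].
have Hcy : is_cycle e (x :: p).
  rewrite /is_cycle Hu /=.
  case: p Hp Hu Hl => [|z [|z' p]] Hp Hu Hl.
  - by move: exy; rewrite /= in Hl; rewrite Hl eirr.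
  - by move: Hp; rewrite /= in Hl; rewrite Hl /= /rm /= !eqxx andbF.
  - have Hp' := sub_path (@rm_e x y) Hp.
    rewrite -cats1 cat_path Hp' /= andbT.
    by rewrite /= in Hl; rewrite Hl esym.
rewrite ((proj2 Hcyc) _ Hcy x y) /cycle_edge mem_head -Hl mem_last /=.
by move: (next_last_uniq Hu); rewrite /next => ->; rewrite eqxx orbT.
Qed.

Lemma cedge_sym x y : cycle_edge C x y = cycle_edge C y x.
Proof. by rewrite /cycle_edge andbCA orbC. Qed.

Lemma cedge_inC x y : cycle_edge C x y -> (x \in C) && (y \in C).
Proof. by case/and3P=> -> ->. Qed.

Lemma next_cedge x y : e x y -> next C x == y -> cycle_edge C x y.
Proof.
move=> exy /eqP Hn; have xC : x \in C.
  case xC: (x \in C) => //; move: Hn; rewrite next_nth xC => Hxy.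
  by move: exy; rewrite Hxy eirr.
by rewrite /cycle_edge xC -Hn mem_next xC eqxx.
Qed.

Lemma arc x y p q : p \in C -> q \in C -> ~~ cycle_edge C x y ->
  connect (rm x y) p q.
Proof.
move=> pC qC Hn.
have [uC cC] : uniq C /\ cycle e C by case: Hcyc => /and3P[? _ ?].
case/rot_to: pC => i s Hrot.
pose cE := [rel z w | e z w && (next C z == w)].
have cyc : cycle cE (p :: s).
  rewrite -Hrot cycle_relI !rot_cycle cC /=.
  exact: (cycle_next uC).
have Hps : path cE p s by move: cyc; rewrite /= rcons_path; case/andP.
have qs : q \in p :: s by rewrite -Hrot mem_rot.
apply: (connect_sub (e := cE)); last first.
  exact: (path_connect Hps qs).
move=> z w /andP[ezw Hnx]; apply: connect1.
rewrite /rm /= ezw /=; apply/negP=> /orP[/andP[/eqP zx /eqP wy]|/andP[/eqP zy /eqP wx]].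
  by move: Hn; rewrite -zx -wy (next_cedge ezw Hnx).
by move: Hn; rewrite cedge_sym -zy -wx (next_cedge ezw Hnx).
Qed.


Definition A : pred T := fun x =>
  (x \in C) || ((root e x == x) && [forall y, (y \in C) ==> ~~ connect e x y]).

Lemma csym : connect_sym e.
Proof. exact: sym_connect_sym. Qed.

Definition wlk k v := [exists t : k.-tuple T, path e v t && A (last v t)].

Lemma wlkP k v : reflect (exists p, [/\ size p = k, path e v p & A (last v p)])
  (wlk k v).
Proof.
apply: (iffP existsP) => [[t /andP[H1 H2]]|[p [Hs H1 H2]]].
  by exists (tval t); rewrite size_tuple.
have Hs' : size p == k by rewrite Hs.
by exists (Tuple Hs') => /=; rewrite H1 H2.
Qed.

Lemma Areach v : exists k, wlk k v.
Proof.
case E: [exists y, (y \in C) && connect e v y].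
  case/existsP: E => y /andP[yC /connectP[p Hp Hl]].
  exists (size p); apply/wlkP; exists p; split => //.
  by rewrite /A -Hl yC.
have Hr := connect_root e v.
case/connectP: (Hr) => p Hp Hl.
exists (size p); apply/wlkP; exists p; split => //; rewrite -Hl /A.
rewrite (root_root csym) eqxx /=; apply/orP; right; apply/forallP => y.
apply/implyP => yC; apply/negP => Hc.
move/negbT: E; rewrite negb_exists => /forallP/(_ y); rewrite yC /=.
by rewrite (connect_trans Hr Hc).
Qed.

Definition d v := ex_minn (Areach v).

Lemma d_le k v p : size p = k -> path e v p -> A (last v p) -> d v <= k.
Proof.
move=> Hs Hp Hl; rewrite /d; case: ex_minnP => m _ Hm; apply: Hm.
by apply/wlkP; exists p.
Qed.

Lemma d_walk v : exists p, [/\ size p = d v, path e v p & A (last v p)].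
Proof. by rewrite /d; case: ex_minnP => m /wlkP. Qed.

Lemma d_edge x y : e x y -> d y <= (d x).+1.
Proof.
move=> exy; case: (d_walk x) => p [Hs Hp Hl].
apply: (@d_le _ _ (x :: p)); first by rewrite /= Hs.
  by rewrite /= esym exy.
by [].
Qed.

Lemma d0 v : (d v == 0) = A v.
Proof.
apply/idP/idP => [/eqP H|Hv].
  by case: (d_walk v) => p [Hs _ Hl]; move: Hs Hl; rewrite H; case: p.
by rewrite -leqn0; apply: (@d_le _ _ [::]).
Qed.

Lemma descend p v : path e v p -> A (last v p) -> size p = d v ->
  path [rel z w | e z w && (d z == (d w).+1)] v p.
Proof.
elim: p v => [//|z p IH] v /= /andP[evz Hp] Hl Hs.
have H1 : d z <= size p by apply: (@d_le _ _ p).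
have H2 : d v <= (d z).+1 by apply: d_edge; rewrite esym.
have Ez : d z = size p.
  apply/eqP; rewrite eqn_leq H1 /= -ltnS Hs; exact: H2.
by rewrite evz -Hs Ez eqxx /= IH.
Qed.

Lemma aprime x y p q : A p -> A q -> connect e p q -> ~~ cycle_edge C x y ->
  connect (rm x y) p q.
Proof.
move=> Ap Aq Hpq Hn.
case/orP: Ap => [pC|/andP[/eqP rp /forallP Hp]];
  case/orP: Aq => [qC|/andP[/eqP rq /forallP Hq]].
- exact: arc.
- by move: (Hq p); rewrite pC /= csym Hpq.
- by move: (Hp q); rewrite qC /= Hpq.
- move/(rootP csym): Hpq; rewrite rp rq => ->; exact: connect0.
Qed.

Lemma rm_connect_e x y a b : connect (rm x y) a b -> connect e a b.
Proof.
apply: connect_sub => z w /rm_e; exact: connect1.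
Qed.

Lemma core x y p q : e x y -> A p -> A q -> connect (rm x y) x p ->
  connect (rm x y) y q -> cycle_edge C x y.
Proof.
move=> exy Ap Aq Hxp Hyq.
case E: (cycle_edge C x y) => //.
have Hpq : connect e p q.
  apply: (connect_trans _ (rm_connect_e Hyq)).
  apply: (connect_trans _ (connect1 exy)).
  by rewrite csym (rm_connect_e Hxp).
have H := aprime Ap Aq Hpq (negbT E).
rewrite -E; apply: key => //.
apply: (connect_trans Hxp); apply: (connect_trans H).
by rewrite (sym_connect_sym (@rm_sym x y)).
Qed.

Lemma F1 x y : e x y -> d x = d y -> cycle_edge C x y.
Proof.
move=> exy Hd.
case: (d_walk x) => px [Hsx Hpx Hlx].
case: (d_walk y) => py [Hsy Hpy Hly].
have sub : subrel [rel z w | e z w && (d z == (d w).+1)] (rm x y).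
  move=> z w /andP[ezw /eqP Hzw]; rewrite /rm /= ezw /=.
  apply/negP => /orP[/andP[/eqP zx /eqP wy]|/andP[/eqP zy /eqP wx]].
    by move: Hzw; rewrite zx wy Hd => /n_Sn.
  by move: Hzw; rewrite zy wx Hd => /n_Sn.
apply: (core exy Hlx Hly).
  by apply/connectP; exists px => //; apply: (sub_path sub); apply: descend.
by apply/connectP; exists py => //; apply: (sub_path sub); apply: descend.
Qed.

Lemma F4 v w1 w2 : e v w1 -> e v w2 -> A w1 -> A w2 -> v \notin C -> w1 = w2.
Proof.
move=> e1 e2 A1 A2 vC; apply/eqP; apply/negP => /negP Hne.
have Hvw : v != w1 by apply/negP => /eqP Hv; move: e1; rewrite Hv eirr.
have H : cycle_edge C v w1.
  apply: (core e1 A2 A1); last exact: connect0.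
  apply: connect1; rewrite /rm /= e2 /= eqxx /= (negbTE Hvw) /= orbF.
  by rewrite eq_sym.
by move: (cedge_inC H); rewrite (negbTE vC).
Qed.

End MSide.

Section HSide.
Variables (T : finType) (e : rel T) (ta tb tc u : T).
Hypotheses (esym : symmetric e) (eab : e ta tb) (ebc : e tb tc) (eca : e tc ta)
  (Hcon : connect e ta u).

Lemma walk_ext q : path e ta q -> last ta q = u -> forall j,
  exists q', [/\ size q' = size q + j.*2, path e ta q' & last ta q' = u].
Proof.
move=> Hp Hl; elim=> [|j [q' [Hs Hp' Hl']]]; first by exists q; rewrite addn0.
exists [:: tb, ta & q']; split => //=.
  by rewrite Hs doubleS !addnS.
by rewrite eab esym eab Hp'.
Qed.

Lemma walk_len L : #|T| + 1 <= L ->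
  exists p, [/\ size p = L, path e ta p & last ta p = u].
Proof.
move=> HL; case/connectP: Hcon => p0 Hp0 Hl0.
case: (shortenP Hp0) Hl0 => p Hp Hu _ Hl; have {Hl}Hl : last ta p = u by rewrite Hl.
have Hsz : size p < #|T|.
  by move/card_uniqP: Hu => /= <-; apply: max_card.
have Hle : size p + 2 <= L by apply: leq_trans HL; rewrite addn2 -addn1 leq_add2r.
set m := L - size p.
have Em : L = size p + m by rewrite /m subnKC // (leq_trans _ Hle) // leq_addr.
have m2 : 2 <= m by rewrite /m leq_subRL // (leq_trans _ Hle) // leq_addr.
case Om: (odd m).
  have Hp3 : path e ta [:: tb, tc, ta & p] by rewrite /= eab ebc eca Hp.
  have Hl3 : last ta [:: tb, tc, ta & p] = u by [].
  case: (walk_ext Hp3 Hl3 (m - 3)./2) => q [Hs Hq Hlq].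
  exists q; split => //; rewrite Hs Em /=.
  have m3 : 2 < m by rewrite ltn_neqAle m2 andbT; apply/negP=> /eqP H; rewrite -H in Om.
  have : odd (m - 3) = false by rewrite oddB // Om.
  move=> O3; rewrite halfK O3 subn0.
  by rewrite -addn3 -addnA [3 + _]addnC subnK.
case: (walk_ext Hp Hl m./2) => q [Hs Hq Hlq].
by exists q; split => //; rewrite Hs Em halfK Om subn0.
Qed.

End HSide.

Lemma next_index (T : finType) (C : seq T) x : uniq C -> x \in C ->
  index (next C x) C = if (index x C).+1 == size C then 0 else (index x C).+1.
Proof.
case: C => [//|z C'] Hu xC; rewrite next_nth xC.
have Hi : index x (z :: C') < (size C').+1 by rewrite -[(size C').+1]/(size (z :: C')) index_mem.
case: (ltnP (index x (z :: C')) (size C')) => Hlt.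
  rewrite -[nth z C' _]/(nth z (z :: C') (index x (z :: C')).+1).
  rewrite index_uniq //= eqSS (ltn_eqF Hlt) //.
have -> : index x (z :: C') = size C' by apply/eqP; rewrite eqn_leq Hlt -ltnS Hi.
by rewrite nth_default //= !eqxx.
Qed.

Section Chi.
Variables (TH TM : finType) (eH : rel TH) (ta tb tc : TH) (C : seq TM).
Hypotheses (eHs : symmetric eH) (eab : eH ta tb) (ebc : eH tb tc) (eca : eH tc ta)
  (uC : uniq C) (sC : 2 < size C).

Definition chi x := let i := index x C in
  if i == (size C).-1 then tc else if odd i then tb else ta.

Lemma chi_next x : x \in C -> eH (chi x) (chi (next C x)).
Proof.
move=> xC; rewrite /chi (next_index uC xC).
have Hi : index x C < size C by rewrite index_mem.
case: ((index x C).+1 =P size C) => [Hn|Hn].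
  rewrite -Hn /= eqxx.
  by have -> : (0 == index x C) = false by move: sC; rewrite -Hn; case: (index x C).
have Hne : (index x C == (size C).-1) = false.
  apply/negP => /eqP H; apply: Hn; rewrite H prednK //; exact: leq_ltn_trans Hi.
rewrite Hne.
case: ((index x C).+1 == (size C).-1); first by case: (odd _); rewrite // eHs.
by rewrite /=; case: (odd (index x C)); rewrite //= eHs.
Qed.

Lemma chi_edge x y : cycle_edge C x y -> eH (chi x) (chi y).
Proof.
case/and3P => xC yC /orP[/eqP <-|/eqP <-]; first exact: chi_next.
by rewrite eHs; exact: chi_next.
Qed.

Lemma chi_val x : [|| chi x == ta, chi x == tb | chi x == tc].
Proof. by rewrite /chi; case: ifP => _; last case: ifP => _; rewrite eqxx ?orbT. Qed.

End Chi.

Theorem lemma9 (TH TM : finType) (eH : rel TH) (eM : rel TM) (u : TH)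
    (C : seq TM) (r : nat) :
  simple_graph eH -> connected_graph eH -> has_triangle eH ->
  simple_graph eM -> unique_cycle eM C ->
  #|TH| + 3 <= r ->
  exists h : TM -> TH,
    is_hom eM eH h /\
    (forall v : TM, dist_to_eq eM v (fun x => x \in C) r -> h v = u).
Proof.
move=> [eHs eHi] Hcon [ta [tb [tc /and3P[eab ebc eca]]]] [eMs eMi] Huc Hr.
have [uC sC cC] : [/\ uniq C, 2 < size C & cycle eM C].
  by case: Huc => /and3P[? ? ?].
have r3 : 3 <= r by apply: leq_trans Hr; rewrite leq_addl.
have HL : #|TH| + 1 <= r - 2.
  rewrite leq_subRL; last exact: (leq_trans _ r3).
  by rewrite addnC -addnA.
have [p [Hps Hpp Hpl]] := walk_len eHs eab ebc eca (Hcon ta u) HL.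
have [u' eu] : exists u', eH u u'.
  case: (u =P ta) => [->|Hne]; first by exists tb.
  case/connectP: (Hcon u ta) => [[|z q]] /= Hq Hl; first by rewrite Hl in Hne.
  by exists z; case/andP: Hq.
pose G k := if k <= r then nth ta (ta :: p) (k - 2) else if odd (k - r) then u' else u.
have G2 : G 2 = ta by rewrite /G (leq_trans _ r3).
have Gr : G r = u.
  rewrite /G leqnn -Hps -Hpl.
  by move: (nth_last ta (ta :: p)) => /= ->.
have Gadj : forall k, 2 <= k -> eH (G k) (G k.+1).
  move=> k k2; rewrite /G.
  case: (ltnP k r) => Hkr.
    rewrite (ltnW Hkr) (subSn k2).
    have Hi : k - 2 < size p by rewrite Hps ltn_sub2r.
    by move/pathP: Hpp => /(_ ta _ Hi).
  case: (eqVneq k r) => [->|Hne].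
    by move: Gr; rewrite /G leqnn subSnn /= => ->.
  have Hkr' : r < k by rewrite ltn_neqAle eq_sym Hne Hkr.
  rewrite leqNgt Hkr' /= subSn // /=.
  by case: (odd (k - r)); rewrite //= eHs.
pose dd := d C eMs.
pose ch := chi ta tb tc C.
pose h0 w := if w \in C then ch w else ta.
pose h v := if v \in C then ch v else if dd v == 0 then ta else
  if dd v == 1 then (if [exists w, eM v w && (dd w == 0) && (h0 w == tb)] then tc else tb)
  else G (dd v).
have CA : forall x, x \in C -> A eM C x by move=> x xC; rewrite /A xC.
have dC : forall x, x \in C -> dd x = 0 by move=> x /CA; rewrite -(d0 C eMs) => /eqP.
have hv0 : forall x, dd x = 0 -> h x = h0 x.
  by move=> x Hx; rewrite /h /h0 Hx; case: (x \in C).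
have Hstep : forall x y, eM x y -> dd y = (dd x).+1 -> eH (h x) (h y).
  move=> x y exy Hd.
  have yC : y \notin C by apply/negP => /dC; rewrite Hd.
  have hy : h y = if dd y == 0 then ta else
    if dd y == 1 then (if [exists w, eM y w && (dd w == 0) && (h0 w == tb)] then tc else tb)
    else G (dd y) by rewrite /h (negbTE yC).
  case: (eqVneq (dd x) 0) => [Hx0|Hx0].
    rewrite hv0 // hy Hd Hx0 /=.
    case: ifP => [/existsP[w /andP[/andP[eyw /eqP Hw0] /eqP Hw]]|Hno].
      have Ax : A eM C x by rewrite -(d0 C eMs); apply/eqP; exact: Hx0.
      have Aw : A eM C w by rewrite -(d0 C eMs); apply/eqP; exact: Hw0.
      have := F4 eMs eMi Huc eyw (_ : eM y x) Aw Ax yC.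
      by rewrite eMs exy => /(_ isT) <-; rewrite Hw.
    have Hx : h0 x != tb.
      apply/negP => Hb; move/negbT: Hno; rewrite negb_exists => /forallP/(_ x).
      by rewrite eMs exy Hx0 eqxx Hb.
    rewrite /h0 in Hx *; case: (x \in C) Hx => Hx; last by rewrite eab.
    have := chi_val ta tb tc C x; rewrite -/ch.
    by case/or3P => /eqP Hc; rewrite Hc in Hx *; [done | rewrite eqxx in Hx | rewrite eHs].
  have xC : x \notin C by apply/negP => /dC /eqP; rewrite (negbTE Hx0).
  have hx : h x = if dd x == 1 then
     (if [exists w, eM x w && (dd w == 0) && (h0 w == tb)] then tc else tb)
    else G (dd x) by rewrite /h (negbTE xC) (negbTE Hx0).
  rewrite hx hy Hd /=.
  case: (eqVneq (dd x) 1) => [->|Hx1] /=.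
    by rewrite G2; case: ifP => _; rewrite // eHs.
  have H2 : 2 <= dd x by move: Hx0 Hx1; case: (dd x) => [|[|]].
  by rewrite eqSS (negbTE Hx0); exact: Gadj.
exists h; split.
  move=> x y exy.
  have H1 := d_edge C eMs exy.
  have H2 := d_edge C eMs (_ : eM y x); rewrite eMs in H2; have {}H2 := H2 exy.
  case: (eqVneq (dd x) (dd y)) => [Heq|Hne].
    have He := F1 eMi Huc exy Heq.
    case/and3P: (He) => xC yC _.
    rewrite /h xC yC; exact: chi_edge.
  move: (H1); rewrite leq_eqVlt => /orP[/eqP Hy|Hlt].
    exact: Hstep.
  have Hx : dd x = (dd y).+1.
    apply/eqP; rewrite eqn_leq H2 /=.
    rewrite ltnS leq_eqVlt eq_sym (negbTE Hne) /= in Hlt.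
    by [].
  by rewrite eHs; apply: Hstep; rewrite // eMs.
move=> v [[q [Hqs Hqp Hql]] Hmin].
have Hle : dd v <= r by apply: (d_le eMs Hqs Hqp); rewrite /A Hql.
have Hdv : dd v = r.
  apply/eqP; rewrite eqn_leq Hle /= leqNgt; apply/negP => Hlt.
  case: (d_walk C eMs v) => p' [Hs' Hp' Hl'].
  case/orP: Hl' => [HlC|/andP[_ /forallP Hf]].
    by apply: (Hmin _ Hlt); exists p'.
  move: (Hf (last v q)); rewrite Hql /= => /negP; apply.
  have c1 : connect eM v (last v p') by apply/connectP; exists p'.
  have c2 : connect eM v (last v q) by apply/connectP; exists q.
  by apply: connect_trans c2; rewrite (csym eMs).
have vC : v \notin C by apply/negP => /dC; rewrite Hdv => H; move: r3; rewrite H.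
rewrite /h (negbTE vC) Hdv.
have -> : (r == 0) = false by apply/negP => /eqP H; move: r3; rewrite H.
have -> : (r == 1) = false by apply/negP => /eqP H; move: r3; rewrite H.
exact: Gr.
Qed.
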